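(* Let $G$ be a graph and $T$ a tree 3-spanner of $G$. Let $u,p,q$ be vertices of $G$ such that $u$ lies on the $p,q$-path of $T$ and $p,q\notin N_T[u]$. Then every $p,q$-path of $G$ contains a vertex of $N_T[u]$.
   Context: Graphs are finite, simple and loopless. $N_T[u]$ denotes the closed neighbourhood of $u$ in $T$, that is, $u$ together with its neighbours in $T$. A tree 3-spanner of $G$ is a spanning subgraph $T$ of $G$ that is a tree and satisfies $d_T(a,b)\le 3\,d_G(a,b)$ for all vertices $a,b$ of $G$. *)

(* Defs.v *)
From mathcomp Require Import all_boot.
Set Implicit Arguments. Unset Strict Implicit. Unset Printing Implicit Defensive.

Definition simple_graph (V : finType) (e : rel V) : Prop :=
  symmetric e /\ irreflexive e.

(* A walk of length (size s) from x to y: the vertex sequence x :: s. *)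
Definition walk (V : finType) (e : rel V) (x y : V) (s : seq V) : Prop :=
  path e x s /\ last x s = y.

Definition gpath (V : finType) (e : rel V) (x y : V) (s : seq V) : Prop :=
  walk e x y s /\ uniq (x :: s).

Definition is_dist (V : finType) (e : rel V) (x y : V) (d : nat) : Prop :=
  (exists s, walk e x y s /\ size s = d) /\
  (forall s, walk e x y s -> d <= size s).

Definition has_cycle (V : finType) (e : rel V) : Prop :=
  exists x s, 2 <= size s /\ uniq (x :: s) /\ path e x s /\ e (last x s) x.

Definition is_tree (V : finType) (e : rel V) : Prop :=
  simple_graph e /\ (forall x y : V, connect e x y) /\ ~ has_cycle e.

Definition subgraph (V : finType) (t g : rel V) : Prop :=
  forall x y, t x y -> g x y.

Definition tree_3_spanner (V : finType) (g t : rel V) : Prop :=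
  subgraph t g /\ is_tree t /\
  (forall a b dT dG, is_dist t a b dT -> is_dist g a b dG -> dT <= 3 * dG).

Definition closed_nbhd (V : finType) (t : rel V) (u : V) : pred V :=
  [pred x | (x == u) || t u x].

(* Main.v *)
From Stdlib Require Import Classical.
Require Import Defs.
From mathcomp Require Import all_boot.
Set Implicit Arguments. Unset Strict Implicit.

Lemma min_exists (P : nat -> Prop) n : P n -> exists m, P m /\ forall k, P k -> m <= k.
Proof.
elim: n {-2}n (leqnn n) => [|N IH] n Hn Pn.
  exists n; split=> // k _; by move: Hn; rewrite leqn0 => /eqP ->.
case: (classic (exists k, k < n /\ P k)) => [[k [Hk Pk]]|H].
  apply: (IH k) => //; by rewrite -ltnS (leq_trans Hk Hn).
exists n; split=> // k Pk; rewrite leqNgt; apply/negP => Hk; apply: H; by exists k.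
Qed.

Section S.
Variables (V : finType) (t : rel V) (u : V).
Hypothesis tsym : symmetric t.
Definition r := [rel a b | [&& t a b, a != u & b != u]].

Lemma rsym : symmetric r.
Proof. move=> a b /=; rewrite tsym; by case: (a != u); case: (b != u); rewrite ?andbF ?andbT. Qed.

Lemma path_r x w : path t x w -> all (fun v => v != u) (x :: w) -> path r x w.
Proof.
elim: w x => [|y w IH] x //= /andP[txy pw] /and3P[xu yu aw].
by rewrite txy xu yu /= IH //= yu.
Qed.

Lemma r_path x w : path r x w -> all (fun v => v != u) w /\ path t x w.
Proof.
elim: w x => [|y w IH] x //= /andP[/and3P[txy _ yu] pw].
by case: (IH _ pw) => -> ->; rewrite yu txy.
Qed.

Lemma conn_of x w : path t x w -> all (fun v => v != u) (x :: w) -> connect r x (last x w).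
Proof. move=> pw aw; apply/connectP; exists w => //; exact: path_r. Qed.

Lemma cyc c1 c2 : ~ has_cycle t -> t c1 u -> t u c2 -> c1 != c2 -> c1 != u ->
  ~ connect r c1 c2.
Proof.
move=> nc t1 t2 neq c1u /connectP[w pw lw].
move: lw; case: (shortenP pw) => w' pw' uw' _ lw.
case: (r_path pw') => aw' pt.
apply: nc; exists u, (c1 :: w'); split.
  case: w' lw {pw' uw' aw' pt} => [|? ?] /= lw; last by [].
  by move: neq; rewrite lw eqxx.
split.
  rewrite cons_uniq uw' andbT inE negb_or eq_sym c1u /=.
  apply/negP => /(allP aw'); by rewrite eqxx.
by rewrite /= tsym t1 pt /= -lw tsym.
Qed.
End S.

Theorem lemma1 (V : finType) (g t : rel V) (u p q : V) :
  simple_graph g ->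
  tree_3_spanner g t ->
  (* u lies on the (unique) p,q-path of T *)
  (exists s, gpath t p q s /\ u \in p :: s) ->
  p \notin closed_nbhd t u -> q \notin closed_nbhd t u ->
  forall s, gpath g p q s -> exists2 x, x \in p :: s & x \in closed_nbhd t u.
Proof.
move=> [gsym girr] [sub [[[tsym tirr] [tconn tnc]] span]] [sT [[[pT lT] uT] uin]] pN qN s [[ps ls] us].
have rs : symmetric (r t u) := @rsym _ t u tsym.
rewrite !inE !negb_or in pN qN.
case/andP: pN => pu tup; case/andP: qN => qu tuq.
have npq : ~ connect (r t u) p q.
  move=> cpq.
  have uS : u \in sT by move: uin; rewrite inE eq_sym (negbTE pu).
  move: pT lT uT; case/splitPr: uS => s1 s2 pT lT uT.
  rewrite cat_path /= in pT; case/and3P: pT => p1 t1 p2.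
  case: s2 lT uT p2 => [|c2 s3] lT uT p2.
    by move: lT; rewrite last_cat /= => E; move: qu; rewrite E eqxx.
  rewrite last_cat /= in lT; case/andP: p2 => t2 p3.
  rewrite -cat_cons cat_uniq in uT; case/and3P: uT => u1 h u2.
  have nu1 : u \notin p :: s1 by move: h; apply: contra => H; apply/hasP; exists u => //; exact: mem_head.
  have c1p : connect (r t u) p (last p s1).
    apply: conn_of => //; apply/allP => v vin; apply/negP => /eqP E; by rewrite -E vin in nu1.
  move: u2; rewrite /= => /andP[nu2 u3].
  have c2q : connect (r t u) c2 q.
    rewrite -lT; apply: conn_of => //; apply/allP => v vin; apply/negP => /eqP E.
    by move: nu2; rewrite -E vin.
  apply: (cyc tsym tnc t1 t2).
  - apply/negP => /eqP E; move/hasP: h; apply; exists c2.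
      by rewrite !inE eqxx orbT.
    by rewrite -E mem_last.
  - apply/negP => /eqP E; move: nu1; by rewrite -E mem_last.
  rewrite (sym_connect_sym rs) in c1p.
  apply: connect_trans c1p (connect_trans cpq _).
  by rewrite (sym_connect_sym rs).
have key : forall x y, g x y -> x != u -> ~~ t u x -> y != u -> ~~ t u y ->
    connect (r t u) x y.
  move=> x y gxy xu tux yu tuy.
  have xy : x != y by apply/negP => /eqP E; move: (girr x); rewrite {2}E gxy.
  have dG : is_dist g x y 1.
    split; first by exists [:: y]; rewrite /walk /= gxy.
    by move=> [|a w] [_ /= E] //; move: xy; rewrite E eqxx.
  have [w0 pw0 lw0] := connectP (tconn x y).
  have [m [[w [[pw lw] sw]] mmin]] :=
    @min_exists (fun n => exists w, walk t x y w /\ size w = n) _ (ex_intro _ w0 (conj (conj pw0 (esym lw0)) erefl)).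
  have dT : is_dist t x y m.
    split; first by exists w.
    by move=> w' ww'; apply: mmin; exists w'.
  have := span _ _ _ _ dT dG; rewrite -sw muln1 => sz.
  rewrite -lw; apply/connectP; exists w => //.
  move: sz pw lw; case: w {sw} => [|a [|b [|c [|d w]]]] //= _.
  - by move=> /andP[txa _] E; subst a; rewrite txa xu yu.
  - move=> /and3P[txa tab _] E; subst b.
    have au : a != u by apply/negP => /eqP E; subst a; rewrite tab in tuy.
    by rewrite txa tab xu yu au.
  - move=> /and4P[txa tab tbc _] E; subst c.
    have au : a != u by apply/negP => /eqP E; subst a; rewrite tsym txa in tux.
    have bu : b != u by apply/negP => /eqP E; subst b; rewrite tbc in tuy.
    by rewrite txa tab tbc xu yu au bu.
case h: (has (mem (closed_nbhd t u)) (p :: s)).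
  by case/hasP: h => x xin xN; exists x.
exfalso; apply: npq.
move/negbT: h; rewrite -all_predC.
have : forall x w, path g x w -> all (predC (mem (closed_nbhd t u))) (x :: w) ->
    connect (r t u) x (last x w).
  move=> x w; elim: w x => [|y w IH] x /=; first by rewrite connect0.
  move=> /andP[gxy pw] /and3P[xN yN aw].
  apply: connect_trans (IH _ pw _); last by rewrite /= yN.
  move: xN yN; rewrite /= !inE !negb_or => /andP[xu tux] /andP[yu tuy].
  exact: key.
by move=> H /(H _ _ ps); rewrite ls.
Qed.
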